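(* Let $X$ be a topological space. The following are equivalent: (a) $X$ is totally Lindelöf; (b) every $\omega$-closed filter base $\mathcal{F}$ on $X$ is contained in some total $\omega$-closed filter base $\mathcal{H}$ on $X$; (c) every $\delta$-stable filter base $\mathcal{F}$ on $X$ is contained in some total $\delta$-stable filter base $\mathcal{H}$ on $X$.
   Context: A filter base on $X$ is a nonempty $\mathcal{F}\subseteq\mathcal{P}(X)$ with $\emptyset\notin\mathcal{F}$ and closed under pairwise intersections. $\mathcal{F}$ is stable under countable intersections if for every countable $S\subseteq\mathcal{F}$ there is $H\in\mathcal{F}$ with $H\subseteq\bigcap S$; $\omega$-closed if $\bigcap S\in\mathcal{F}$ for every nonempty countable $S\subseteq\mathcal{F}$; $\delta$-stable if $\bigcap S\neq\emptyset$ for every countable $S\subseteq\mathcal{F}$. $ad(\mathcal{F})=\bigcap\{\overline{F}:F\in\mathcal{F}\}$. A filter base $\mathcal{F}$ is total if every filter base $\mathcal{H}\supseteq\mathcal{F}$ satisfies $ad(\mathcal{H})\neq\emptyset$. $X$ is totally Lindelöf if every filter base on $X$ stable under countable intersections is contained in a total filter base on $X$ stable under countable intersections. *)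

(* Defs.v *)
From mathcomp Require Import all_boot all_order.
From mathcomp Require Import all_classical all_reals all_analysis.
Set Implicit Arguments. Unset Strict Implicit. Unset Printing Implicit Defensive.
Local Open Scope classical_set_scope.

Section Defs.
Context {X : topologicalType}.

Definition filter_base (F : set (set X)) : Prop :=
  F !=set0 /\ ~ F set0 /\ (forall A B, F A -> F B -> F (A `&` B)).

Definition stable_countable (F : set (set X)) : Prop :=
  forall S : set (set X), S `<=` F -> countable S ->
    exists2 H, F H & H `<=` \bigcap_(A in S) A.

Definition omega_closed (F : set (set X)) : Prop :=
  forall S : set (set X), S `<=` F -> S !=set0 -> countable S ->
    F (\bigcap_(A in S) A).

Definition delta_stable (F : set (set X)) : Prop :=
  forall S : set (set X), S `<=` F -> countable S ->
    (\bigcap_(A in S) A) !=set0.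

Definition adherence (F : set (set X)) : set X :=
  \bigcap_(A in F) closure A.

Definition total_fb (F : set (set X)) : Prop :=
  forall H : set (set X), filter_base H -> F `<=` H -> adherence H !=set0.

End Defs.

Definition totally_Lindelof (X : topologicalType) : Prop :=
  forall F : set (set X), filter_base F -> stable_countable F ->
    exists H : set (set X),
      [/\ filter_base H, stable_countable H, total_fb H & F `<=` H].

(* Main.v *)
Require Import Defs.
From mathcomp Require Import all_boot all_order.
From mathcomp Require Import all_classical all_reals all_analysis.
Local Open Scope classical_set_scope.

Section Aux.
Context {X : topologicalType}.

Lemma countableU2 T (A B : set T) : countable A -> countable B -> countable (A `|` B).
Proof.
move=> cA cB.
have -> : A `|` B = \bigcup_(b in [set: bool]) (if b then A else B).
  apply/seteqP; split => x.
  - by case=> h; [exists true | exists false].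
  - by case=> -[] _ h; [left | right].
apply: bigcup_countable; first exact: countableP.
by case.
Qed.

Definition ccl (F : set (set X)) : set (set X) :=
  [set A | exists S : set (set X), [/\ S `<=` F, countable S, S !=set0 &
     A = \bigcap_(B in S) B]].

Lemma L1 (F : set (set X)) : filter_base F -> omega_closed F -> stable_countable F.
Proof.
move=> [[a Fa] [nF0 FI]] oc S SF cS.
have [->|S0] := eqVneq S set0.
  by exists a => // x _; rewrite bigcap_set0.
exists (\bigcap_(A in S) A) => //; apply: oc => //.
exact/set0P.
Qed.

Lemma L2 (F : set (set X)) : filter_base F -> stable_countable F -> delta_stable F.
Proof.
move=> [_ [nF0 _]] st S SF cS.
have [H FH HS] := st S SF cS.
have /set0P [x Hx] : H != set0 by apply/eqP => h; apply: nF0; rewrite -h.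
by exists x; apply: HS.
Qed.

Lemma L3 (F G : set (set X)) : total_fb F -> F `<=` G -> total_fb G.
Proof. by move=> tF FG H fH GH; apply: tF => //; apply: subset_trans GH. Qed.

Lemma ccl_sub (F : set (set X)) : F `<=` ccl F.
Proof.
move=> A FA; exists [set A]; split.
- by move=> B ->.
- exact: countable1.
- by exists A.
- by rewrite bigcap_set1.
Qed.

Lemma ccl_omega (F : set (set X)) : omega_closed (ccl F).
Proof.
move=> T TC [A0 TA0] cT.
have /choice [g hg] : forall A : set X, exists S : set (set X), T A ->
  [/\ S `<=` F, countable S, S !=set0 & A = \bigcap_(B in S) B].
  move=> A; have [TA|nTA] := pselect (T A).
    have [S hS] := TC A TA; by exists S.
  by exists set0.
exists (\bigcup_(A in T) g A); split.
- by move=> B [A TA gAB]; have [+ _ _ _] := hg A TA; apply.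
- apply: bigcup_countable => // A TA; by have [_ + _ _] := hg A TA.
- have [_ _ [B gB] _] := hg A0 TA0; by exists B; exists A0.
- apply/seteqP; split => x.
  + move=> hx B [A TA gAB]; have [_ _ _ eA] := hg A TA.
    by have := hx A TA; rewrite eA; apply.
  + move=> hx A TA; have [_ _ _ ->] := hg A TA.
    by move=> B gAB; apply: hx; exists A.
Qed.

Lemma ccl_fb (F : set (set X)) : filter_base F -> delta_stable F -> filter_base (ccl F).
Proof.
move=> [[a Fa] [nF0 FI]] ds; split; [|split].
- by exists a; apply: ccl_sub.
- move=> [S [SF cS _ e]]; have [x hx] := ds S SF cS.
  by have : (set0 : set X) x by rewrite e.
- move=> A B [S [SF cS S0 ->]] [S' [SF' cS' _ ->]].
  exists (S `|` S'); split.
  + by move=> C [h|h]; [apply: SF | apply: SF'].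
  + exact: countableU2.
  + by case: S0 => C SC; exists C; left.
  + by rewrite bigcap_setU.
Qed.

End Aux.
Arguments L1 {X F}.
Arguments L2 {X F}.
Arguments L3 {X F G}.
Arguments ccl_fb {X F}.

Theorem proposition1p2 (X : topologicalType) :
  (totally_Lindelof X <->
   (forall F : set (set X), filter_base F -> omega_closed F ->
      exists H : set (set X),
        [/\ filter_base H, omega_closed H, total_fb H & F `<=` H])) /\
  (totally_Lindelof X <->
   (forall F : set (set X), filter_base F -> delta_stable F ->
      exists H : set (set X),
        [/\ filter_base H, delta_stable H, total_fb H & F `<=` H])).
Proof.
split; split.
- move=> TL F fF oF.
  have [H [fH sH tH FH]] := TL F fF (L1 fF oF).
  exists (ccl H); split.
  + exact: ccl_fb fH (L2 fH sH).
  + exact: ccl_omega.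
  + exact: L3 tH (@ccl_sub _ H).
  + exact: subset_trans FH (@ccl_sub _ H).
- move=> hb F fF sF.
  have dF := L2 fF sF.
  have [H [fH oH tH FH]] := hb (ccl F) (ccl_fb fF dF) (@ccl_omega _ F).
  exists H; split => //.
  + exact: L1.
  + exact: subset_trans (@ccl_sub _ F) FH.
- move=> TL F fF dF.
  have fC := ccl_fb fF dF.
  have [H [fH sH tH FH]] := TL (ccl F) fC (L1 fC (@ccl_omega _ F)).
  exists H; split => //.
  + exact: L2.
  + exact: subset_trans (@ccl_sub _ F) FH.
- move=> hc F fF sF.
  have [H [fH dH tH FH]] := hc F fF (L2 fF sF).
  have fC := ccl_fb fH dH.
  exists (ccl H); split => //.
  + exact: L1 fC (@ccl_omega _ H).
  + exact: L3 tH (@ccl_sub _ H).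
  + exact: subset_trans FH (@ccl_sub _ H).
Qed.
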